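(* For all metric formulas $\varphi,\psi$ and every interval $I$, the following equivalences hold in MHT: $\neg(\varphi\,\mathsf{U}_I\,\psi)\equiv\neg\varphi\,\mathsf{R}_I\,\neg\psi$, $\neg(\varphi\,\mathsf{R}_I\,\psi)\equiv\neg\varphi\,\mathsf{U}_I\,\neg\psi$, $\neg(\varphi\,\mathsf{S}_I\,\psi)\equiv\neg\varphi\,\mathsf{T}_I\,\neg\psi$, $\neg(\varphi\,\mathsf{T}_I\,\psi)\equiv\neg\varphi\,\mathsf{S}_I\,\neg\psi$.
   Context: Write $[m,n)=\{i\in\mathbb{N}\mid m\le i<n\}$, $(m,n]=\{i\in\mathbb{N}\mid m<i\le n\}$. Metric formulas over a set of atoms $\mathcal{A}$: $\varphi::=p\mid\bot\mid\varphi_1\wedge\varphi_2\mid\varphi_1\vee\varphi_2\mid\varphi_1\to\varphi_2\mid\bullet_I\varphi\mid\varphi_1\mathsf{S}_I\varphi_2\mid\varphi_1\mathsf{T}_I\varphi_2\mid\circ_I\varphi\mid\varphi_1\mathsf{U}_I\varphi_2\mid\varphi_1\mathsf{R}_I\varphi_2$, $p\in\mathcal{A}$, $I=[m,n)$, $m\in\mathbb{N}$, $n\in\mathbb{N}\cup\{\omega\}$; $\neg\varphi:=\varphi\to\bot$, $\varphi\leftrightarrow\psi:=(\varphi\to\psi)\wedge(\psi\to\varphi)$. A timed HT-trace of length $\lambda\in\mathbb{N}\cup\{\omega\}$ is $\mathbf{M}=(\langle\mathbf{H},\mathbf{T}\rangle,\tau)$ with $H_i\subseteq T_i\subseteq\mathcal{A}$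 for $i\in[0,\lambda)$, $\tau:[0,\lambda)\to\mathbb{N}$, $\tau(0)=0$, $\tau(i)\le\tau(i+1)$. Satisfaction at $k\in[0,\lambda)$: $\bot$ never; $p$ iff $p\in H_k$; $\wedge,\vee$ usual; $\varphi\to\psi$ iff for both $\mathbf{M}'=\mathbf{M}$ and $\mathbf{M}'=(\langle\mathbf{T},\mathbf{T}\rangle,\tau)$, $\mathbf{M}',k\not\models\varphi$ or $\mathbf{M}',k\models\psi$; $\bullet_I\varphi$ iff $k>0$, $\mathbf{M},k-1\models\varphi$, $\tau(k)-\tau(k-1)\in I$; $\varphi\mathsf{S}_I\psi$ iff for some $j\in[0,k]$ with $\tau(k)-\tau(j)\in I$, $\mathbf{M},j\models\psi$ and $\mathbf{M},i\models\varphi$ for all $i\in(j,k]$; $\varphi\mathsf{T}_I\psi$ iff for all $j\in[0,k]$ with $\tau(k)-\tau(j)\in I$, $\mathbf{M},j\models\psi$ or $\mathbf{M},i\models\varphi$ for some $i\in(j,k]$; $\circ_I\varphi$ iff $k+1<\lambda$, $\mathbf{M},k+1\models\varphi$, $\tau(k+1)-\tau(k)\in I$; $\varphi\mathsf{U}_I\psi$ iff for some $j\in[k,\lambda)$ with $\tau(j)-\tau(k)\in I$, $\mathbf{M},j\models\psi$ and $\mathbf{M},i\models\varphi$ for all $i\in[k,j)$; $\varphi\mathsf{R}_I\psi$ iff for all $j\in[k,\lambda)$ with $\tau(j)-\tau(k)\in I$, $\mathbf{M},j\models\psi$ or $\mathbf{M},i\models\varphi$ for some $i\in[k,j)$. $\alpha\equiv\beta$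 in MHT means $\alpha\leftrightarrow\beta$ is satisfied at every $k\in[0,\lambda)$ of every timed HT-trace of every length $\lambda$. *)

(* Defs.v *)
From Stdlib Require Import Arith.

Set Implicit Arguments.

(* Extended naturals N ∪ {ω}: [None] stands for ω. *)
Definition enat := option nat.

Definition below (n : enat) (i : nat) : Prop :=
  match n with None => True | Some n' => i < n' end.

(* Interval J = [m, n) with m ∈ N, n ∈ N ∪ {ω}. *)
Record interval := Intv { ilo : nat; ihi : enat }.

Definition in_intv (J : interval) (d : nat) : Prop :=
  ilo J <= d /\ below (ihi J) d.

Inductive formula (A : Type) : Type :=
| Atom : A -> formula A
| Bot : formula A
| And : formula A -> formula A -> formula A
| Or : formula A -> formula A -> formula A
| Imp : formula A -> formula A -> formula A
| Prev : interval -> formula A -> formula A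
| Since : interval -> formula A -> formula A -> formula A
| Trigger : interval -> formula A -> formula A -> formula A
| Next : interval -> formula A -> formula A
| Until : interval -> formula A -> formula A -> formula A
| Release : interval -> formula A -> formula A -> formula A.

Arguments Bot {A}.

Definition Neg A (phi : formula A) : formula A := Imp phi Bot.
Definition Iff A (phi psi : formula A) : formula A :=
  And (Imp phi psi) (Imp psi phi).

Definition is_trace A (lam : enat) (H T : nat -> A -> Prop) (tau : nat -> nat)
  : Prop :=
  (forall i, below lam i -> forall p, H i p -> T i p) /\
  tau 0 = 0 /\
  (forall i, below lam (S i) -> tau i <= tau (S i)).

(* Satisfaction of [phi] at [k] in the trace with "here" world [W]
   (either H or T) and "there" world [T]. Implication quantifies over both
   M = (<H,T>,tau) and (<T,T>,tau). *)
Fixpoint sat A (lam : enat) (T : nat -> A -> Prop) (tau : nat -> nat)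
  (W : nat -> A -> Prop) (k : nat) (phi : formula A) {struct phi} : Prop :=
  match phi with
  | Atom p => W k p
  | Bot => False
  | And a b => sat lam T tau W k a /\ sat lam T tau W k b
  | Or a b => sat lam T tau W k a \/ sat lam T tau W k b
  | Imp a b =>
      (sat lam T tau W k a -> sat lam T tau W k b) /\
      (sat lam T tau T k a -> sat lam T tau T k b)
  | Prev J a =>
      0 < k /\ sat lam T tau W (k - 1) a /\ in_intv J (tau k - tau (k - 1))
  | Since J a b =>
      exists j, j <= k /\ in_intv J (tau k - tau j) /\ sat lam T tau W j b /\
        (forall i, j < i -> i <= k -> sat lam T tau W i a)
  | Trigger J a b =>
      forall j, j <= k -> in_intv J (tau k - tau j) ->
        sat lam T tau W j b \/ (exists i, j < i /\ i <= k /\ sat lam T tau W i a)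
  | Next J a =>
      below lam (S k) /\ sat lam T tau W (S k) a /\ in_intv J (tau (S k) - tau k)
  | Until J a b =>
      exists j, k <= j /\ below lam j /\ in_intv J (tau j - tau k) /\
        sat lam T tau W j b /\ (forall i, k <= i -> i < j -> sat lam T tau W i a)
  | Release J a b =>
      forall j, k <= j -> below lam j -> in_intv J (tau j - tau k) ->
        sat lam T tau W j b \/ (exists i, k <= i /\ i < j /\ sat lam T tau W i a)
  end.

Definition mht_equiv A (alpha beta : formula A) : Prop :=
  forall (lam : enat) (H T : nat -> A -> Prop) (tau : nat -> nat),
    is_trace lam H T tau ->
    forall k, below lam k -> sat lam T tau H k (Iff alpha beta).

(* Main.v *)
Require Import Defs.
From Stdlib Require Import Arith Lia Classical.

Ltac sp := repeat match goal with |- _ /\ _ => split end.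

Lemma below_le (lam : enat) i k : i <= k -> below lam k -> below lam i.
Proof. destruct lam; simpl; intros; lia. Qed.

Lemma persist A lam (H T : nat -> A -> Prop) tau :
  is_trace lam H T tau ->
  forall phi k, below lam k -> sat lam T tau H k phi -> sat lam T tau T k phi.
Proof.
  intros [HT _]. induction phi; intros k Hk; simpl.
  - apply HT; auto.
  - auto.
  - intros [? ?]; split; eauto.
  - intros [?|?]; [left|right]; eauto.
  - intros [_ ?]; auto.
  - intros (h1 & h2 & h3); split; [|split]; auto. apply IHphi; auto. eapply below_le; [|eauto]; lia.
  - intros (j & ? & ? & ? & Hi). exists j; sp; auto.
    + apply IHphi2; auto. eapply below_le; [|eauto]; lia.
    + intros; apply IHphi1; auto. eapply below_le; [|eauto]; lia.
  - intros Hr j ? ?. destruct (Hr j) as [?|(i0&?&?&?)]; auto.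
    + left; apply IHphi2; auto. eapply below_le; [|eauto]; lia.
    + right; exists i0; sp; auto. apply IHphi1; auto. eapply below_le; [|eauto]; lia.
  - intros (h1 & h2 & h3); split; [|split]; auto.
  - intros (j & ? & ? & ? & ? & Hi). exists j; sp; auto.
    intros; apply IHphi1; auto. eapply below_le; [|eauto]; lia.
  - intros Hr j ? ? ?. destruct (Hr j) as [?|(i0&?&?&?)]; auto.
    right; exists i0; sp; auto. apply IHphi1; auto. eapply below_le; [|eauto]; lia.
Qed.

Section S.
Variables (A : Type) (lam : enat) (T W : nat -> A -> Prop) (tau : nat -> nat).
Hypothesis PW : forall phi k, below lam k -> sat lam T tau W k phi -> sat lam T tau T k phi.

Lemma neg_iff a k : below lam k -> (sat lam T tau W k (Neg a) <-> ~ sat lam T tau T k a).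
Proof.
  intros Hk; simpl; split.
  - intros [_ h]; auto.
  - intros h; split; intros; apply h; auto.
Qed.

Lemma bl i k : i <= k -> below lam k -> below lam i.
Proof. apply below_le. Qed.

Ltac bel := match goal with H: below lam ?m |- below lam ?i => apply (bl i m); [lia|exact H] end.

Lemma eqU I a b k : below lam k ->
  (sat lam T tau W k (Neg (Until I a b)) <-> sat lam T tau W k (Release I (Neg a) (Neg b))).
Proof.
  intros Hk. rewrite neg_iff by auto. simpl. split.
  - intros h j ? ? ?. destruct (classic (sat lam T tau T j b)) as [hb|hb].
    + right. destruct (classic (exists i, k <= i /\ i < j /\ ~ sat lam T tau T i a)) as [(i0&?&?&hn0)|hn].
      * exists i0; sp; auto. intro; apply hn0; apply PW; auto. bel.
      * exfalso; apply h; exists j; sp; auto. intros i ? ?.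
        apply NNPP; intro; apply hn; eauto.
    + left; split; intro; apply hb; auto.
  - intros h (j & ? & ? & ? & ? & Hi). destruct (h j) as [[_ h1]|(i0&?&?&_&h1)]; auto.
Qed.

Lemma eqR I a b k : below lam k ->
  (sat lam T tau W k (Neg (Release I a b)) <-> sat lam T tau W k (Until I (Neg a) (Neg b))).
Proof.
  intros Hk. rewrite neg_iff by auto. simpl. split.
  - intros h. apply NNPP; intro hn. apply h. intros j ? ? ?.
    destruct (classic (sat lam T tau T j b)) as [hb|hb]; [left; auto|right].
    apply NNPP; intro hn2. apply hn. exists j; sp; auto.
    all: try (intro; apply hb; auto; fail).
    intros i ? ?. split; intro; apply hn2; exists i; sp; auto.
    apply PW; auto. bel.
  - intros (j & ? & ? & ? & [_ h1] & Hi) h. destruct (h j) as [?|(i0&?&?&?)]; auto.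
    destruct (Hi i0) as [_ h2]; auto.
Qed.

Lemma eqS I a b k : below lam k ->
  (sat lam T tau W k (Neg (Since I a b)) <-> sat lam T tau W k (Trigger I (Neg a) (Neg b))).
Proof.
  intros Hk. rewrite neg_iff by auto. simpl. split.
  - intros h j ? ?. destruct (classic (sat lam T tau T j b)) as [hb|hb].
    + right. destruct (classic (exists i, j < i /\ i <= k /\ ~ sat lam T tau T i a)) as [(i0&?&?&hn0)|hn].
      * exists i0; sp; auto. intro; apply hn0; apply PW; auto. bel.
      * exfalso; apply h; exists j; sp; auto. intros i ? ?.
        apply NNPP; intro; apply hn; eauto.
    + left; split; intro; apply hb; auto. apply PW; auto. bel.
  - intros h (j & ? & ? & ? & Hi). destruct (h j) as [[_ h1]|(i0&?&?&_&h1)]; auto.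
Qed.

Lemma eqT I a b k : below lam k ->
  (sat lam T tau W k (Neg (Trigger I a b)) <-> sat lam T tau W k (Since I (Neg a) (Neg b))).
Proof.
  intros Hk. rewrite neg_iff by auto. simpl. split.
  - intros h. apply NNPP; intro hn. apply h. intros j ? ?.
    destruct (classic (sat lam T tau T j b)) as [hb|hb]; [left; auto|right].
    apply NNPP; intro hn2. apply hn. exists j; sp; auto.
    all: try (intro; apply hb; auto; fail).
    all: try (intro; apply hb; apply PW; auto; bel; fail).
    intros i ? ?. split; intro; apply hn2; exists i; sp; auto.
    apply PW; auto. bel.
  - intros (j & ? & ? & [_ h1] & Hi) h. destruct (h j) as [?|(i0&?&?&?)]; auto.
    destruct (Hi i0) as [_ h2]; auto.
Qed.
End S.

Lemma mk A (X Y : formula A) :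
  (forall lam T W tau k,
     (forall phi k, below lam k -> sat lam T tau W k phi -> sat lam T tau T k phi) ->
     below lam k -> (sat lam T tau W k X <-> sat lam T tau W k Y)) ->
  mht_equiv X Y.
Proof.
  intros E lam H T tau Htr k Hk.
  assert (PT : forall phi k, below lam k -> sat lam T tau T k phi -> sat lam T tau T k phi) by auto.
  pose proof (@persist A lam H T tau Htr) as PH.
  simpl. repeat split; intros;
    first [apply (E lam T H tau k PH Hk); assumption | apply (E lam T T tau k PT Hk); assumption].
Qed.

Theorem proposition8 :
  forall (A : Type) (phi psi : formula A) (I : interval),
    mht_equiv (Neg (Until I phi psi)) (Release I (Neg phi) (Neg psi)) /\
    mht_equiv (Neg (Release I phi psi)) (Until I (Neg phi) (Neg psi)) /\
    mht_equiv (Neg (Since I phi psi)) (Trigger I (Neg phi) (Neg psi)) /\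
    mht_equiv (Neg (Trigger I phi psi)) (Since I (Neg phi) (Neg psi)).
Proof.
  intros. split; [|split; [|split]]; apply mk; intros.
  - apply eqU; auto.
  - apply eqR; auto.
  - apply eqS; auto.
  - apply eqT; auto.
Qed.
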